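(* Let $m\ge3$ be odd and let $\bm d=(d_1,d_2,d_3)\in\mathcal{S}_1^3$, i.e. each $d_i$ is odd and squarefree. Then $\theta(O^+(X^{\bm d}_2))=\mathbb{Z}_2(\mathbb{Q}_2^\times)^2$, where $\mathbb{Z}_2(\mathbb{Q}_2^\times)^2$ denotes the set $\{as^2: a\in\mathbb{Z}_2\setminus\{0\},\ s\in\mathbb{Q}_2^\times\}$.
   Context: $V$ is the positive definite ternary quadratic space over $\mathbb{Q}$ with basis $e_1,e_2,e_3$ and bilinear form $B(e_i,e_j)=4(m-2)^2\delta_{ij}$, $Q(x)=B(x,x)$. For $\bm d\in\mathbb{N}^3$, $L^{\bm d}=\mathbb{Z}d_1e_1+\mathbb{Z}d_2e_2+\mathbb{Z}d_3e_3$, $\nu=\frac{4-m}{2(m-2)}(e_1+e_2+e_3)$ and $X^{\bm d}=L^{\bm d}+\nu$. $V_2=V\otimes\mathbb{Q}_2$, $X^{\bm d}_2=L^{\bm d}\otimes\mathbb{Z}_2+\nu$, $O^+(X^{\bm d}_2)=\{\sigma\in O^+(V_2):\sigma(X^{\bm d}_2)=X^{\bm d}_2\}$, and $\theta$ is the spinor norm $O^+(V_2)\to\mathbb{Q}_2^\times/(\mathbb{Q}_2^\times)^2$, with $\theta(O^+(X^{\bm d}_2))$ identified with its preimage in $\mathbb{Q}_2^\times$. *)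

(* Defs.v *)
From mathcomp Require Import all_boot all_order all_algebra.
Set Implicit Arguments. Unset Strict Implicit. Unset Printing Implicit Defensive.
Import Order.TTheory GRing.Theory Num.Theory.
Local Open Scope ring_scope.

(* The field Q_2, characterised up to isomorphism: a field F with a   *)
(* discrete valuation v (meaningful on nonzero elements) with v 2 = 1, *)
(* in which Q is dense and which is complete.  Such an F is the        *)
(* completion of Q for the 2-adic valuation, i.e. F is (isomorphic to) *)
(* Q_2 as a valued field.                                              *)
Record is_Q2 (F : fieldType) (v : F -> int) : Prop := {
  v_mul : forall x y : F, x != 0 -> y != 0 -> v (x * y) = v x + v y;
  v_add : forall x y : F, x != 0 -> y != 0 -> x + y != 0 ->
            Num.min (v x) (v y) <= v (x + y);
  v_two : v 2 = 1;
  v_dense : forall (x : F) (n : int), exists q : rat,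
            x - ratr q = 0 \/ n <= v (x - ratr q);
  v_complete : forall u : nat -> F,
     (forall n : int, exists N : nat, forall i j : nat, (N <= i)%N -> (N <= j)%N ->
          u i - u j = 0 \/ n <= v (u i - u j)) ->
     exists l : F, forall n : int, exists N : nat, forall i : nat, (N <= i)%N ->
          u i - l = 0 \/ n <= v (u i - l)
}.

Definition inZ2 (F : fieldType) (v : F -> int) (x : F) : Prop := x = 0 \/ 0 <= v x.

Definition squarefree (n : nat) : Prop := forall p : nat, prime p -> ~~ (p * p %| n)%N.

Definition B (F : fieldType) (m : nat) (x y : 'rV[F]_3) : F :=
  (4 * (m%:R - 2) ^+ 2) * (x *m y^T) 0 0.

Definition Qf (F : fieldType) (m : nat) (x : 'rV[F]_3) : F := B m x x.

Definition refl (F : fieldType) (m : nat) (u x : 'rV[F]_3) : 'rV[F]_3 :=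
  x - (2 * B m x u / Qf m u) *: u.

Definition refl_prod (F : fieldType) (m : nat) (us : seq 'rV[F]_3) : 'rV[F]_3 -> 'rV[F]_3 :=
  foldr (fun u f => refl m u \o f) id us.

(* nu = (4-m)/(2(m-2)) (e_1+e_2+e_3) : its common coordinate *)
Definition nu0 (F : fieldType) (m : nat) : F :=
  ((4%:Z - m%:Z)%:~R) / (2 * (m%:R - 2)).

(* X^d_2 = L^d (x) Z_2 + nu *)
Definition inX2 (F : fieldType) (v : F -> int) (m : nat) (d : 'I_3 -> nat)
    (x : 'rV[F]_3) : Prop :=
  forall i : 'I_3, exists a : F, inZ2 v a /\ x 0 i = a * (d i)%:R + nu0 F m.

(* theta(O^+(X^d_2)), as a subset of Q_2^x (preimage of the image in
   Q_2^x/(Q_2^x)^2).  Every element of O^+(V_2) is a product of an even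
   number of reflections (Cartan-Dieudonne) and conversely, and the spinor
   norm of tau_{u_1}...tau_{u_r} is Q(u_1)...Q(u_r) mod squares. *)
Definition theta_OX (F : fieldType) (v : F -> int) (m : nat) (d : 'I_3 -> nat)
    (a : F) : Prop :=
  a != 0 /\
  exists us : seq 'rV[F]_3,
    [/\ all (fun u => Qf m u != 0) us,
        ~~ odd (size us),
        (forall y, inX2 v m d y <->
             exists x, inX2 v m d x /\ refl_prod m us x = y) &
        exists s : F, s != 0 /\ a = s ^+ 2 * \prod_(u <- us) Qf m u].

Definition Z2_sq (F : fieldType) (v : F -> int) (b : F) : Prop :=
  exists a s : F, [/\ inZ2 v a, a != 0, s != 0 & b = a * s ^+ 2].

(* Main.v *)
Require Import Defs.
From mathcomp Require Import all_boot all_order all_algebra.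
From mathcomp Require Import zify ring lra.
Set Implicit Arguments. Unset Strict Implicit. Unset Printing Implicit Defensive.
Import Order.TTheory GRing.Theory Num.Theory.
Local Open Scope ring_scope.

Definition vge (F : fieldType) (v : F -> int) (x : F) (n : int) : Prop :=
  x = 0 \/ n <= v x.

Lemma v1 (F : fieldType) (v : F -> int) (HF : is_Q2 v) : v 1 = 0.
Proof.
have := v_mul HF (oner_neq0 F) (oner_neq0 F); rewrite mulr1 => h.
have : v 1 + v 1 - v 1 = v 1 - v 1 by rewrite -h.
by rewrite addrK subrr.
Qed.

Lemma vN1 (F : fieldType) (v : F -> int) (HF : is_Q2 v) : v (-1) = 0.
Proof.
have hn : (-1 : F) != 0 by rewrite oppr_eq0 oner_neq0.
have := v_mul HF hn hn; rewrite mulrNN mulr1 (v1 HF) => h. lia.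
Qed.

Lemma vN (F : fieldType) (v : F -> int) (HF : is_Q2 v) x : x != 0 -> v (- x) = v x.
Proof.
move=> hx; have hn : (-1 : F) != 0 by rewrite oppr_eq0 oner_neq0.
by rewrite -mulN1r (v_mul HF hn hx) (vN1 HF) add0r.
Qed.

Lemma vV (F : fieldType) (v : F -> int) (HF : is_Q2 v) x : x != 0 -> v (x^-1) = - v x.
Proof.
move=> hx; have hi : x^-1 != 0 by rewrite invr_eq0.
have := v_mul HF hx hi; rewrite divff // (v1 HF) => h. lia.
Qed.

Lemma ge0 (F : fieldType) (v : F -> int) n : vge v 0 n.
Proof. by left. Qed.

Lemma ge_le (F : fieldType) (v : F -> int) x n k : vge v x n -> k <= n -> vge v x k.
Proof. case=> [->|h] hk; [by left|right; lia]. Qed.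

Lemma geN (F : fieldType) (v : F -> int) (HF : is_Q2 v) x n : vge v x n -> vge v (- x) n.
Proof.
case=> [->|h]; first by rewrite oppr0; left.
have [->|hx] := eqVneq x 0; first by rewrite oppr0; left.
by right; rewrite (vN HF hx).
Qed.

Lemma geD (F : fieldType) (v : F -> int) (HF : is_Q2 v) x y n :
  vge v x n -> vge v y n -> vge v (x + y) n.
Proof.
case=> [->|hx]; first by rewrite add0r.
case=> [->|hy]; first by rewrite addr0; right.
have [hxy|hxy] := eqVneq (x + y) 0; first by left.
have [->|x0] := eqVneq x 0; first by rewrite add0r; right.
have [->|y0] := eqVneq y 0; first by rewrite addr0; right.
right; have := v_add HF x0 y0 hxy.
case: (leP (v x) (v y)) => _ h; lia.
Qed.

Lemma geB (F : fieldType) (v : F -> int) (HF : is_Q2 v) x y n :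
  vge v x n -> vge v y n -> vge v (x - y) n.
Proof. by move=> hx hy; apply: geD => //; apply: geN. Qed.

Lemma geM (F : fieldType) (v : F -> int) (HF : is_Q2 v) x y a b :
  vge v x a -> vge v y b -> vge v (x * y) (a + b).
Proof.
case=> [->|hx]; first by rewrite mul0r; left.
case=> [->|hy]; first by rewrite mulr0; left.
have [->|x0] := eqVneq x 0; first by rewrite mul0r; left.
have [->|y0] := eqVneq y 0; first by rewrite mulr0; left.
right; rewrite (v_mul HF x0 y0); lia.
Qed.

Lemma ge_nat (F : fieldType) (v : F -> int) (HF : is_Q2 v) (k : nat) : vge v (k%:R) 0.
Proof.
elim: k => [|k IH]; first by left.
rewrite -addn1 natrD; apply: geD => //; right; rewrite (v1 HF).
done.
Qed.

Lemma ge_int (F : fieldType) (v : F -> int) (HF : is_Q2 v) (z : int) : vge v (z%:~R) 0.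
Proof.
case: z => n; first exact: ge_nat.
by rewrite NegzE mulrNz; apply: geN => //; apply: ge_nat.
Qed.

Lemma ge2 (F : fieldType) (v : F -> int) (HF : is_Q2 v) : vge v 2 1.
Proof. by right; rewrite (v_two HF). Qed.

Lemma ge_zero (F : fieldType) (v : F -> int) x : (forall n, vge v x n) -> x = 0.
Proof.
move=> h; case: (h (v x + 1)) => // ?; lia.
Qed.

Lemma not_ge1_1 (F : fieldType) (v : F -> int) (HF : is_Q2 v) : ~ vge v 1 1.
Proof. case; [apply/eqP; exact: oner_neq0| rewrite (v1 HF) //]. Qed.

Lemma odd_int_unit (F : fieldType) (v : F -> int) (HF : is_Q2 v) (z : int) :
  ~~ (2 %| z)%Z -> z%:~R != 0 :> F /\ v z%:~R = 0.
Proof.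
move=> hz.
have [w hw] : exists w : int, z = 2 * w + 1.
  exists (z %/ 2)%Z; have := divz_eq z 2; have := modz_ge0 z (isT : (2:int) != 0).
  have := ltz_pmod z (isT : (0 < 2 :> int)). move: hz; rewrite dvdzE => hz; lia.
have key : ~ vge v (z%:~R : F) 1.
  move=> h; apply: (not_ge1_1 HF).
  have -> : (1 : F) = z%:~R - 2 * w%:~R by rewrite hw rmorphD rmorphM /= addrAC subrr add0r.
  apply: geB => //; have := geM HF (ge2 HF) (ge_int HF w); rewrite addr0 //.
have [z0|z0] := eqVneq (z%:~R : F) 0; first by exfalso; apply: key; left.
split => //; case: (ge_int HF z) => [/eqP|h]; first by rewrite (negPf z0).
have : ~ 1 <= v z%:~R by move=> h1; apply: key; right.
lia.
Qed.

Lemma odd_nat_unit (F : fieldType) (v : F -> int) (HF : is_Q2 v) (k : nat) :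
  odd k -> k%:R != 0 :> F /\ v k%:R = 0.
Proof.
move=> hk; have := @odd_int_unit F v HF k; rewrite pmulrn; apply.
rewrite dvdzE /=; rewrite dvdn2 hk //.
Qed.

Lemma ge_inv_unit (F : fieldType) (v : F -> int) (HF : is_Q2 v) x :
  x != 0 -> v x = 0 -> vge v (x^-1) 0.
Proof. by move=> x0 vx; right; rewrite (vV HF x0) vx. Qed.

Lemma ge_inv_odd (F : fieldType) (v : F -> int) (HF : is_Q2 v) (k : nat) :
  odd k -> vge v ((k%:R : F)^-1) 0.
Proof. by move=> hk; case: (odd_nat_unit HF hk) => ??; apply: ge_inv_unit. Qed.

Lemma v8 (F : fieldType) (v : F -> int) (HF : is_Q2 v) :
  (2:F) != 0 -> (8:F) != 0 /\ v 8 = 3.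
Proof.
move=> h2; have e : (8:F) = 2 * (2 * 2) by rewrite -!natrM.
have h4 : (2 * 2 : F) != 0 by rewrite mulf_neq0.
rewrite e (v_mul HF h2 h4) (v_mul HF h2 h2) (v_two HF); split => //.
by rewrite mulf_neq0.
Qed.

Lemma hensel (F : fieldType) (v : F -> int) (HF : is_Q2 v) :
  (2:F) != 0 -> forall c : F, vge v (c - 1) 3 -> exists t, t != 0 /\ c = t ^+ 2.
Proof.
move=> h2 c hc.
have [h8 vv8] := v8 HF h2.
set y := (c - 1) / 8.
have hy : vge v y 0.
  have h8i : vge v (8^-1 : F) (-3) by right; rewrite (vV HF h8) vv8.
  by have := geM HF hc h8i.
pose f := fun t : F => y - 2 * t ^+ 2.
pose z := fun n => iter n f 0.
have zS : forall n, z n.+1 = y - 2 * z n ^+ 2 by [].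
have g2 : vge v 2 0 by apply: ge_le (ge2 HF) _.
have hz : forall n, vge v (z n) 0.
  elim=> [|n IH]; first by left.
  rewrite zS; apply: geB => //; have := geM HF g2 (geM HF IH IH); by rewrite !add0r.
have hd : forall n, vge v (z n.+1 - z n) n%:Z.
  elim=> [|n IH]; first by rewrite zS /= expr0n /= mulr0 !subr0.
  have -> : z n.+2 - z n.+1 = - (2 * ((z n.+1 - z n) * (z n.+1 + z n))).
    by rewrite !zS; ring.
  apply: geN => //; apply: ge_le (geM HF (ge2 HF) (geM HF IH (geD HF (hz _) (hz _)))) _.
  lia.
have hc2 : forall i k, vge v (z (i + k)%N - z i) i%:Z.
  move=> i; elim=> [|k IH]; first by rewrite addn0 subrr; left.
  have -> : z (i + k.+1)%N - z i = (z (i + k).+1 - z (i + k)%N) + (z (i + k)%N - z i).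
    by rewrite addnS addrA subrK.
  apply: geD => //; apply: ge_le (hd _) _; lia.
have cau : forall n : int, exists N : nat, forall i j : nat, (N <= i)%N -> (N <= j)%N ->
          vge v (z i - z j) n.
  move=> n; exists `|n|%N => i j hi hj.
  have [hij|hij] := leqP i j.
    have -> : z i - z j = - (z (i + (j - i))%N - z i) by rewrite subnKC // opprB.
    apply: geN => //; apply: ge_le (hc2 _ _) _; lia.
  have -> : z i - z j = (z (j + (i - j))%N - z j) by rewrite subnKC // ltnW.
  apply: ge_le (hc2 _ _) _; lia.
have [l hl] := v_complete HF cau.
have {}hl : forall n : int, exists N : nat, forall i : nat, (N <= i)%N -> vge v (z i - l) n by [].
have hl0 : vge v l 0.
  have [N hN] := hl 0; have := hN N (leqnn N) => h.
  have -> : l = z N - (z N - l) by rewrite opprB addrC subrK.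
  by apply: geB.
have hq : l + 2 * l ^+ 2 - y = 0.
  apply: (@ge_zero _ v) => n.
  have [N hN] := hl n.
  have -> : l + 2 * l ^+ 2 - y = - (z N.+1 - l) - 2 * ((z N - l) * (z N + l)).
    by rewrite zS; ring.
  apply: geB => //; first by apply: geN => //; apply: hN.
  apply: ge_le (geM HF (ge2 HF) (geM HF (hN N (leqnn N)) (geD HF (hz _) hl0))) _; lia.
have hc' : c = (1 + 4 * l) ^+ 2.
  have : 8 * y = c - 1 by rewrite /y mulrC divfK.
  move/eqP: hq; rewrite subr_eq0 => /eqP hq.
  rewrite -hq => e.
  have -> : c = (c - 1) + 1 by rewrite subrK.
  rewrite -e; ring.
exists (1 + 4 * l); split => //.
apply/negP => /eqP t0; move: hc; rewrite hc' t0 expr0n /= add0r.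
case=> [/eqP|]; first by rewrite oppr_eq0 oner_eq0.
by rewrite (vN1 HF).
Qed.

Lemma int_mod8 (n d : int) : ~~ (2 %| n)%Z -> ~~ (2 %| d)%Z ->
  [\/ (8 %| n - 1 * d)%Z, (8 %| n - 3 * d)%Z, (8 %| n - 5 * d)%Z | (8 %| n - 15 * d)%Z].
Proof.
move=> hn hd.
have : (8 %| n - d)%Z || (8 %| n - 3*d)%Z || (8 %| n - 5*d)%Z || (8 %| n - 15*d)%Z by lia.
rewrite mul1r; case/orP=> [/orP [/orP [h|h]|h]|h]; by [constructor 1|constructor 2|constructor 3|constructor 4].
Qed.

Lemma ge_div8 (F : fieldType) (v : F -> int) (HF : is_Q2 v) (x : int) :
  (8 %| x)%Z -> vge v (x%:~R : F) 3.
Proof.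
move=> /divzK <-; rewrite rmorphM /=.
have e : ((8 : int)%:~R : F) = 2 * (2 * 2) by rewrite -!natrM.
rewrite e; have := geM HF (ge_int HF (x %/ 8)%Z) (geM HF (ge2 HF) (geM HF (ge2 HF) (ge2 HF))).
done.
Qed.

Lemma unit_class (F : fieldType) (v : F -> int) (HF : is_Q2 v) (e : F) :
  e != 0 -> v e = 0 -> exists r : nat, r \in [:: 1; 3; 5; 15]%N /\ vge v (e - r%:R) 3.
Proof.
move=> e0 ve.
have [q hq] := v_dense HF e 3.
have hq' : vge v (e - ratr q) 3 by [].
have q0 : ratr q != 0 :> F.
  apply/negP => /eqP q0; move: hq'; rewrite q0 subr0; case=> [/eqP|]; first by rewrite (negPf e0).
  by rewrite ve.
have vq : v (ratr q : F) = 0.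
  have hge : vge v (ratr q : F) 0.
    have -> : (ratr q : F) = e - (e - ratr q) by rewrite opprB addrC subrK.
    apply: geB => //; [by right; rewrite ve| exact: ge_le hq' _].
  case: hge => [/eqP|h]; first by rewrite (negPf q0).
  have : ~ 1 <= v (ratr q : F).
    move=> h1.
    have : vge v e 1.
      have -> : e = ratr q + (e - ratr q) by rewrite addrC subrK.
      by apply: geD => //; [right | exact: ge_le hq' _].
    by case=> [/eqP|]; [rewrite (negPf e0) | rewrite ve].
  lia.
move: q0 vq; rewrite /ratr.
set n := numq q; set d := denq q.
have cop := coprime_num_den q; rewrite -/n -/d in cop.
move=> q0 vq.
have d0 : (d%:~R : F) != 0 by apply: contraNneq q0 => ->; rewrite invr0 mulr0.
have n0 : (n%:~R : F) != 0 by apply: contraNneq q0 => ->; rewrite mul0r.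
have [hd|hd] := boolP (2 %| d)%Z.
  exfalso.
  have hn : ~~ (2 %| n)%Z.
    apply/negP => hn; move: cop; rewrite /coprime => /eqP hg.
    have : (2 %| gcdn `|n| `|d|)%N by rewrite dvdn_gcd; apply/andP; split.
    by rewrite hg.
  have [_ vn] := odd_int_unit HF hn.
  have gd : vge v (d%:~R : F) 1.
    move/divzK: hd => <-; rewrite rmorphM /=.
    by have := geM HF (ge_int HF (d %/ 2)%Z) (ge2 HF).
  case: gd => [/eqP|gd]; first by rewrite (negPf d0).
  move: vq; rewrite (v_mul HF n0) ?invr_eq0 // (vV HF d0) vn; lia.
have [hn|hn] := boolP (2 %| n)%Z.
  exfalso.
  have [_ vd] := odd_int_unit HF hd.
  have gn : vge v (n%:~R : F) 1.
    move/divzK: hn => <-; rewrite rmorphM /=.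
    by have := geM HF (ge_int HF (n %/ 2)%Z) (ge2 HF).
  case: gn => [/eqP|gn]; first by rewrite (negPf n0).
  move: vq; rewrite (v_mul HF n0) ?invr_eq0 // (vV HF d0) vd; lia.
have [_ vd] := odd_int_unit HF hd.
have gdi : vge v (d%:~R : F)^-1 0 by apply: ge_inv_unit.
have fin : forall r : nat, (8 %| n - r%:Z * d)%Z -> vge v (e - r%:R) 3.
  move=> r hr.
  have -> : e - r%:R = (e - n%:~R / d%:~R) + ((n - r%:Z * d)%:~R / d%:~R).
    rewrite rmorphB rmorphM /= mulrBl -mulrA divff // mulr1.
    by rewrite addrA subrK.
  apply: geD => //; have := geM HF (ge_div8 HF hr) gdi; by rewrite addr0.
case: (int_mod8 hn hd) => h.
- by exists 1%N; split => //; apply: fin.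
- by exists 3%N; split => //; apply: fin.
- by exists 5%N; split => //; apply: fin.
- by exists 15%N; split => //; apply: fin.
Qed.

Definition Xc (F : fieldType) (v : F -> int) (m : nat) (x : 'rV[F]_3) : Prop :=
  forall i, vge v (x 0 i - nu0 F m) 0.

Lemma inX2_Xc (F : fieldType) (v : F -> int) (HF : is_Q2 v) m (d : 'I_3 -> nat) y :
  (forall i, odd (d i)) -> inX2 v m d y <-> Xc v m y.
Proof.
move=> hd; split.
  move=> h i; have [a [ha ->]] := h i; rewrite addrK.
  by have := geM HF ha (ge_nat HF (d i)); rewrite addr0.
move=> h i; have [d0 _] := odd_nat_unit HF (hd i).
exists ((y 0 i - nu0 F m) / (d i)%:R); split; last by rewrite divfK // subrK.
by have := geM HF (h i) (ge_inv_odd HF (hd i)); rewrite addr0.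
Qed.

Lemma ge_sum (F : fieldType) (v : F -> int) (HF : is_Q2 v) (G : 'I_3 -> F) k :
  (forall j, vge v (G j) k) -> vge v (\sum_j G j) k.
Proof. by move=> h; apply: (big_ind (fun x => vge v x k)) => //; [left|move=> ???; apply: geD]. Qed.

Lemma dotE (F : fieldType) (x y : 'rV[F]_3) : (x *m y^T) 0 0 = \sum_j x 0 j * y 0 j.
Proof. by rewrite !mxE; apply: eq_bigr => j _; rewrite mxE. Qed.

Lemma B_lin (F : fieldType) m (x w u : 'rV[F]_3) c :
  B m (x - c *: w) u = B m x u - c * B m w u.
Proof. by rewrite /B mulmxBl -scalemxAl !mxE; ring. Qed.

Lemma refl_inv (F : fieldType) m (u x : 'rV[F]_3) :
  Qf m u != 0 -> refl m u (refl m u x) = x.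
Proof.
move=> hQ; rewrite {2}/refl; set c := 2 * B m x u / Qf m u.
rewrite /refl B_lin -/(Qf m u).
have -> : 2 * (B m x u - c * Qf m u) / Qf m u = - c by rewrite /c; field.
by rewrite scaleNr opprK subrK.
Qed.

Definition good (F : fieldType) (v : F -> int) m (u : 'rV[F]_3) : Prop :=
  Qf m u != 0 /\ forall x, Xc v m x -> Xc v m (refl m u x).

Lemma good_gen (F : fieldType) (v : F -> int) (HF : is_Q2 v) m (u : 'rV[F]_3) (n : F) :
  4 * (m%:R - 2) ^+ 2 != 0 :> F -> vge v (2 * nu0 F m) 0 ->
  (u *m u^T) 0 0 = n -> n != 0 ->
  (forall i j, vge v (2 * u 0 j * u 0 i / n) 0) ->
  (forall i, vge v ((\sum_j u 0 j) * u 0 i / n) 0) ->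
  good v m u.
Proof.
move=> hK hnu hn n0 hc ht.
have hQ : Qf m u = 4 * (m%:R - 2) ^+ 2 * n by rewrite /Qf /B hn.
split; first by rewrite hQ mulf_neq0.
move=> x hx i; rewrite /refl !mxE.
set K := 4 * (m%:R - 2) ^+ 2 in hK hQ *.
rewrite hQ /B -/K dotE.
set nu := nu0 F m in hnu hx *.
set s := \sum_j x 0 j * u 0 j.
have e1 : s = \sum_j (x 0 j - nu) * u 0 j + nu * \sum_j u 0 j.
  by rewrite /s mulr_sumr -big_split; apply: eq_bigr => j _ /=; ring.
have e2 : \sum_j (x 0 j - nu) * (2 * u 0 j * u 0 i / n) =
          (\sum_j (x 0 j - nu) * u 0 j) * (2 * u 0 i / n).
  by rewrite mulr_suml; apply: eq_bigr => j _; ring.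
have -> : x 0 i - 2 * (K * s) / (K * n) * u 0 i - nu =
   (x 0 i - nu) - (\sum_j (x 0 j - nu) * (2 * u 0 j * u 0 i / n)
                   + (2 * nu) * ((\sum_j u 0 j) * u 0 i / n)).
  rewrite e2 e1; field; by apply/andP.
apply: geB => //; apply: geD => //.
  by apply: ge_sum => // j; have := geM HF (hx j) (hc i j).
by have := geM HF hnu (ht i).
Qed.

Definition PX (F : fieldType) (v : F -> int) m (d : 'I_3 -> nat) (sg : 'rV[F]_3 -> 'rV[F]_3) :=
  forall y, inX2 v m d y <-> exists x, inX2 v m d x /\ sg x = y.

Lemma PX_refl (F : fieldType) (v : F -> int) (HF : is_Q2 v) m d u :
  (forall i, odd (d i)) -> good v m u -> PX v m d (refl m u).
Proof.
move=> hd [hQ hu] y; split.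
  move=> hy; exists (refl m u y); split; last exact: refl_inv.
  by apply/(inX2_Xc _ _ _ hd) => //; apply: hu; apply/(inX2_Xc _ _ _ hd).
case=> x [hx <-]; apply/(inX2_Xc _ _ _ hd) => //; apply: hu; exact/(inX2_Xc _ _ _ hd).
Qed.

Lemma PX_prod (F : fieldType) (v : F -> int) (HF : is_Q2 v) m d (us : seq 'rV[F]_3) :
  (forall i, odd (d i)) -> (forall u, u \in us -> good v m u) -> PX v m d (refl_prod m us).
Proof.
move=> hd; elim: us => [|u us IH] hg.
  by move=> y; split; [move=> hy; exists y | case=> x [hx <-]].
have h1 := PX_refl HF hd (hg u (mem_head _ _)).
have h2 : PX v m d (refl_prod m us) by apply: IH => w hw; apply: hg; rewrite inE hw orbT.
move=> y; split.
  move/h1 => [x1 [/h2 [x [hx <-]] <-]]; by exists x.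
case=> x [hx <-]; apply/h1; exists (refl_prod m us x); split => //.
by apply/h2; exists x.
Qed.

Lemma refl_prod_cat (F : fieldType) m (us ws : seq 'rV[F]_3) x :
  refl_prod m (us ++ ws) x = refl_prod m us (refl_prod m ws x).
Proof. by elim: us => [|u us IH] //=; rewrite /= IH. Qed.

Lemma theta_mul (F : fieldType) (v : F -> int) m d a b :
  theta_OX v m d a -> theta_OX v m d b -> theta_OX v m d (a * b).
Proof.
move=> [a0 [us [h1 h2 h3 [s [s0 ea]]]]] [b0 [ws [k1 k2 k3 [t [t0 eb]]]]].
rewrite /theta_OX; split; first exact: mulf_neq0 a0 b0.
exists (us ++ ws); split.
- by rewrite all_cat h1 k1.
- by rewrite size_cat oddD (negPf h2) (negPf k2).
- move=> y; split.
    move/h3 => [x1 [/k3 [x [hx <-]] <-]]; exists x; split => //; by rewrite refl_prod_cat.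
  case=> x [hx <-]; rewrite refl_prod_cat; apply/h3; exists (refl_prod m ws x); split => //.
  by apply/k3; exists x.
- exists (s * t); split; first by rewrite mulf_neq0.
  by rewrite ea eb big_cat /=; ring.
Qed.

Lemma theta_sq (F : fieldType) (v : F -> int) m d a s :
  s != 0 -> theta_OX v m d a -> theta_OX v m d (s ^+ 2 * a).
Proof.
move=> s0 [a0 [us [h1 h2 h3 [t [t0 ea]]]]].
rewrite /theta_OX; split; first by apply: mulf_neq0 => //; apply: expf_neq0.
exists us; split => //; exists (s * t); split; first by rewrite mulf_neq0.
rewrite ea; ring.
Qed.

Lemma theta_1 (F : fieldType) (v : F -> int) m d : theta_OX v m d 1.
Proof.
rewrite /theta_OX; split; first exact: oner_neq0.
exists [::]; split => //.
  by move=> y; split; [move=> hy; exists y | case=> x [hx <-]].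
by exists 1; split; [exact: oner_neq0| rewrite big_nil expr1n mulr1].
Qed.

Lemma theta_gen (F : fieldType) (v : F -> int) (HF : is_Q2 v) m d (e u : 'rV[F]_3) K n :
  (forall i, odd (d i)) -> good v m e -> good v m u -> Qf m e = K -> Qf m u = K * n ->
  K != 0 -> n != 0 -> theta_OX v m d n.
Proof.
move=> hd ge gu hQe hQu K0 n0; rewrite /theta_OX; split => //.
exists [:: e; u]; split => //.
- by rewrite /= (proj1 ge) (proj1 gu).
- apply: PX_prod => // w; rewrite !inE => /orP [/eqP ->|/eqP ->] //.
- exists K^-1; split; first by rewrite invr_eq0.
  by rewrite !big_cons big_nil hQe hQu; field.
Qed.

Definition vec (F : fieldType) (p q r : nat) : 'rV[F]_3 :=
  \row_(i < 3) (nth 0%N [:: p; q; r] i)%:R.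

Lemma vec_dot (F : fieldType) (p q r : nat) :
  ((vec F p q r) *m (vec F p q r)^T) 0 0 = (p * p + q * q + r * r)%:R.
Proof.
rewrite dotE !big_ord_recr big_ord0 /= !mxE /= add0r -!natrM -!natrD //.
Qed.

Lemma vec_sum (F : fieldType) (p q r : nat) :
  \sum_j (vec F p q r) 0 j = (p + q + r)%:R.
Proof. by rewrite !big_ord_recr big_ord0 /= !mxE /= add0r -!natrD. Qed.

Lemma vec_nat (F : fieldType) (p q r : nat) i : exists k : nat, (vec F p q r) 0 i = k%:R.
Proof. by rewrite mxE; eexists. Qed.

Lemma good_odd (F : fieldType) (v : F -> int) (HF : is_Q2 v) m (p q r : nat) :
  4 * (m%:R - 2) ^+ 2 != 0 :> F -> vge v (2 * nu0 F m) 0 ->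
  odd (p * p + q * q + r * r) -> good v m (vec F p q r).
Proof.
move=> hK hnu ho.
have [n0 _] := odd_nat_unit HF ho (F := F).
have gi := ge_inv_odd HF ho (F := F).
apply: (good_gen HF hK hnu (vec_dot _ _ _ _)) => //.
  move=> i j; have [a ->] := vec_nat F p q r i; have [b ->] := vec_nat F p q r j.
  by have := geM HF (ge_nat HF (2 * b * a)) gi; rewrite !natrM addr0.
move=> i; have [a ->] := vec_nat F p q r i; rewrite vec_sum.
by have := geM HF (ge_nat HF ((p + q + r) * a)) gi; rewrite !natrM addr0.
Qed.

Lemma good_110 (F : fieldType) (v : F -> int) (HF : is_Q2 v) m :
  (2 : F) != 0 ->
  4 * (m%:R - 2) ^+ 2 != 0 :> F -> vge v (2 * nu0 F m) 0 ->
  good v m (vec F 1 1 0).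
Proof.
move=> h2 hK hnu.
apply: (good_gen HF hK hnu (vec_dot _ _ _ _)) => //.
  move=> i j; have [a ->] := vec_nat F 1 1 0 i; have [b ->] := vec_nat F 1 1 0 j.
  have -> : 2 * b%:R * a%:R / (1 * 1 + 1 * 1 + 0 * 0)%:R = (b * a)%:R :> F.
    rewrite natrM /=; field => //.
  exact: ge_nat.
move=> i; have [a ->] := vec_nat F 1 1 0 i; rewrite vec_sum.
have -> : (1 + 1 + 0)%:R * a%:R / (1 * 1 + 1 * 1 + 0 * 0)%:R = a%:R :> F.
  by rewrite /=; field.
exact: ge_nat.
Qed.

Lemma int01 (F : fieldType) (z : int) : (2 : F) = 0 -> z%:~R = 0 :> F \/ z%:~R = 1 :> F.
Proof.
move=> h2; rewrite (divz_eq z 2) rmorphD rmorphM /=.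
have -> : ((2 : int)%:~R : F) = 2 by [].
rewrite h2 mulr0 add0r.
have : ((z %% 2)%Z = 0 \/ (z %% 2)%Z = 1) by lia.
by case=> ->; [left|right].
Qed.

Lemma char2_one (F : fieldType) (v : F -> int) (HF : is_Q2 v) (a : F) :
  (2 : F) = 0 -> a != 0 -> a = 1.
Proof.
move=> h2 a0.
have [q hq] := v_dense HF a ((Posz (`|v a| + `|v (a - 1)%R| + 1)%N)).
have key1 : forall x y : int, ((`|x| + `|y| + 1)%N)%:Z <= x -> False by move=> x y; lia.
have key2 : forall x y : int, ((`|x| + `|y| + 1)%N)%:Z <= y -> False by move=> x y; lia.
have : ratr q = 0 :> F \/ ratr q = 1 :> F.
  rewrite /ratr; case: (int01 (numq q) h2) => ->; first by left; rewrite mul0r.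
  by case: (int01 (denq q) h2) => ->; [left; rewrite invr0 mulr0|right; rewrite invr1 mulr1].
case=> e; rewrite e in hq.
  move: hq; rewrite subr0; case=> [/eqP|]; first by rewrite (negPf a0).
  by move/key1.
case: hq => [/eqP|]; first by rewrite subr_eq0 => /eqP.
by move/key2.
Qed.

Lemma main_char0 (F : fieldType) (v : F -> int) (HF : is_Q2 v)
    (m : nat) (d : 'I_3 -> nat) :
  (2 : F) != 0 -> (3 <= m)%N -> odd m -> (forall i, odd (d i)) ->
  forall a : F, a != 0 -> theta_OX v m d a.
Proof.
move=> h2 hm om hd.
have om2 : odd (m - 2) by rewrite oddB ?om //; apply: ltnW.
have em : (m%:R - 2 : F) = (m - 2)%:R by rewrite natrB //; apply: ltnW.
have [m0 _] := odd_nat_unit HF om2 (F := F).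
have hK : 4 * (m%:R - 2) ^+ 2 != 0 :> F.
  rewrite em mulf_neq0 ?expf_neq0 //.
  have -> : (4 : F) = 2 * 2 by rewrite -natrM.
  by rewrite mulf_neq0.
set K := 4 * (m%:R - 2) ^+ 2 in hK.
have hnu : vge v (2 * nu0 F m) 0.
  have -> : 2 * nu0 F m = (4%:Z - m%:Z)%:~R * ((m - 2)%:R)^-1.
    by rewrite /nu0 -em; field; rewrite em; apply/andP.
  by have := geM HF (ge_int HF _) (ge_inv_odd HF om2); rewrite addr0.
have g1 : good v m (vec F 1 0 0) by apply: good_odd.
have g3 : good v m (vec F 1 1 1) by apply: good_odd.
have g5 : good v m (vec F 1 2 0) by apply: good_odd.
have g2 : good v m (vec F 1 1 0) by apply: good_110.
have Q1 : Qf m (vec F 1 0 0) = K by rewrite /Qf /B vec_dot /= mulr1.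
have QE : forall p q r, Qf m (vec F p q r) = K * (p * p + q * q + r * r)%:R.
  by move=> p q r; rewrite /Qf /B vec_dot.
have t3 : theta_OX v m d (3%:R).
  apply: (theta_gen HF hd g1 g3 Q1 (QE _ _ _) hK).
  by case: (odd_nat_unit HF (isT : odd 3) (F := F)).
have t5 : theta_OX v m d (5%:R).
  apply: (theta_gen HF hd g1 g5 Q1 (QE _ _ _) hK).
  by case: (odd_nat_unit HF (isT : odd 5) (F := F)).
have t2 : theta_OX v m d 2.
  exact: (theta_gen HF hd g1 g2 Q1 (QE _ _ _) hK).
have tu : forall e, e != 0 -> v e = 0 -> theta_OX v m d e.
  move=> e e0 ve.
  have [r [hr gr]] := unit_class HF e0 ve.
  have ro : odd r by move: hr; rewrite !inE => /or4P [] /eqP ->.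
  have tr : theta_OX v m d r%:R.
    move: hr; rewrite !inE => /or4P [] /eqP -> //; first exact: theta_1.
    by rewrite (natrM F 3 5); apply: theta_mul.
  have [r0 _] := odd_nat_unit HF ro (F := F).
  have gc : vge v (e / r%:R - 1) 3.
    have -> : e / r%:R - 1 = (e - r%:R) * (r%:R)^-1 by rewrite mulrBl divff.
    by have := geM HF gr (ge_inv_odd HF ro); rewrite addr0.
  have [t [t0 ct]] := hensel HF h2 gc.
  have -> : e = t ^+ 2 * r%:R by rewrite -ct divfK.
  exact: theta_sq.
have v2i : v (2^-1 : F) = -1 by rewrite (vV HF h2) (v_two HF).
have h4 : (2 ^+ 2 : F) != 0 by apply: expf_neq0.
have v4i : v ((2 ^+ 2)^-1 : F) = -2 by rewrite (vV HF h4) expr2 (v_mul HF h2 h2) (v_two HF).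
have lem1 : forall n : nat, forall a, a != 0 -> v a = n -> theta_OX v m d a.
  elim/ltn_ind => n IH a a0 va.
  case: n IH va => [|[|n]] IH va.
  - exact: tu.
  - have -> : a = 2 * (a / 2) by rewrite mulrC divfK.
    apply: theta_mul => //; apply: tu; first by rewrite mulf_neq0 ?invr_eq0.
    by rewrite (v_mul HF a0) ?invr_eq0 // va v2i.
  - have -> : a = 2 ^+ 2 * (a / 2 ^+ 2) by rewrite mulrC divfK.
    apply: theta_sq => //; apply: (IH n) => //; first by rewrite mulf_neq0 ?invr_eq0.
    by rewrite (v_mul HF a0) ?invr_eq0 // va v4i; lia.
move=> a a0.
case E: (v a) => [n|n]; first exact: (lem1 n).
have ai : a^-1 != 0 by rewrite invr_eq0.
have -> : a = a ^+ 2 * a^-1 by rewrite expr2 -mulrA divff ?mulr1.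
apply: theta_sq => //; apply: (lem1 n.+1) => //.
by rewrite (vV HF a0) E NegzE opprK.
Qed.

Unset Implicit Arguments.

Theorem proposition4p2 (F : fieldType) (v : F -> int) (HF : is_Q2 v)
    (m : nat) (d : 'I_3 -> nat) :
  (3 <= m)%N -> odd m -> (forall i, odd (d i) /\ squarefree (d i)) ->
  forall a : F, theta_OX v m d a <-> Z2_sq v a.
Proof.
move=> hm om hd a; split.
  case=> a0 _.
  have [ha|ha] := leP 0 (v a).
    by exists a, 1; split => //; [right|exact: oner_neq0|rewrite expr1n mulr1].
  exists a^-1, a; split => //; first by right; rewrite (vV HF a0); lia.
    by rewrite invr_eq0.
  by rewrite expr2 mulrA mulVf ?mul1r.
case=> b [s [hb b0 s0 ->]].
have a0 : b * s ^+ 2 != 0 by rewrite mulf_neq0 ?expf_neq0.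
have [h2|h2] := eqVneq (2 : F) 0.
  rewrite (char2_one HF h2 a0); exact: theta_1.
apply: main_char0 => //; move=> i; exact: (proj1 (hd i)).
Qed.
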